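(* Let $a>0$, $B_u>0$, $B_v<0$, $\Delta x\in(0,1]$, $\varepsilon>0$, and let $\alpha<(3+2\sqrt2)B_v^{-1}$. Assume $2aB_v+\tfrac{\Delta x}{\varepsilon}B_u>0$. Then $$-\frac{aB_u^2}{B_v}\alpha+\frac{B_u}{B_v}\frac{\Delta x}{2\varepsilon}<-a(1-B_v\alpha)-\sqrt{-2a\bigl(2aB_v+\tfrac{\Delta x}{\varepsilon}B_u\bigr)\alpha}.$$ *)

(* Defs.v *)
From Stdlib Require Import Reals.

(* Main.v *)
Require Import Defs.
From Stdlib Require Import Reals Lra Psatz.
Open Scope R_scope.

Theorem lemma4 (a Bu Bv dx eps alpha : R)
  (ha : 0 < a) (hBu : 0 < Bu) (hBv : Bv < 0)
  (hdx0 : 0 < dx) (hdx1 : dx <= 1) (heps : 0 < eps)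
  (halpha : alpha < (3 + 2 * sqrt 2) / Bv)
  (hpos : 2 * a * Bv + dx / eps * Bu > 0) :
  - (a * Bu ^ 2 / Bv) * alpha + Bu / Bv * (dx / (2 * eps))
  < - a * (1 - Bv * alpha)
    - sqrt (- 2 * a * (2 * a * Bv + dx / eps * Bu) * alpha).
Proof.
  assert (hBv0 : Bv <> 0) by lra.
  set (c := dx / eps * Bu) in *.
  set (q := (3 + 2 * sqrt 2) / Bv) in *.
  assert (hq : q * Bv = 3 + 2 * sqrt 2) by (unfold q; field; auto).
  pose proof (sqrt_pos 2) as hs2.
  assert (h1 : 0 < (alpha - q) * Bv) by (replace ((alpha - q) * Bv) with ((q - alpha) * (- Bv)) by ring; apply Rmult_lt_0_compat; lra).
  assert (hBa : 0 < Bv * alpha) by nra.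
  assert (hu : 0 < 2 * a * (Bv * alpha)) by (apply Rmult_lt_0_compat; lra).
  set (w := c / Bv).
  assert (hw : w * Bv = c) by (unfold w; field; auto).
  assert (hv : 0 < - w - 2 * a) by nra.
  assert (hX : - 2 * a * (2 * a * Bv + c) * alpha
               = (2 * a * (Bv * alpha)) * (- w - 2 * a)).
  { rewrite <- hw. ring. }
  rewrite hX, sqrt_mult by lra.
  pose proof (sqrt_sqrt (2 * a * (Bv * alpha)) ltac:(lra)) as e1.
  pose proof (sqrt_sqrt (- w - 2 * a) ltac:(lra)) as e2.
  pose proof (sqrt_pos (2 * a * (Bv * alpha))).
  pose proof (sqrt_pos (- w - 2 * a)).
  assert (hsq : sqrt (2 * a * (Bv * alpha)) * sqrt (- w - 2 * a)
     <= ((2 * a * (Bv * alpha)) + (- w - 2 * a)) / 2).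
  { set (x := sqrt (2 * a * (Bv * alpha))) in *.
    set (y := sqrt (- w - 2 * a)) in *.
    rewrite <- e1, <- e2. pose proof (pow2_ge_0 (x - y)). nra. }
  assert (hL : Bu / Bv * (dx / (2 * eps)) = w / 2)
    by (unfold w, c; field; lra).
  set (r := alpha / Bv).
  assert (hr : r * Bv = alpha) by (unfold r; field; auto).
  assert (hr0 : 0 < r) by nra.
  assert (hL2 : - (a * Bu ^ 2 / Bv) * alpha = - a * Bu ^ 2 * r)
    by (unfold r; field; auto).
  rewrite hL, hL2.
  assert (0 < a * Bu ^ 2 * r) by (apply Rmult_lt_0_compat; [apply Rmult_lt_0_compat; [lra | apply pow_lt; lra] | lra]).
  lra.
Qed.
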